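(* Let $T \ge 1$ and $m_u \ge 1$ be integers. Let $\mathscr V_0^*$ be a finite collection of pairwise disjoint intervals of the form $\mathcal V_0 = [(\underline v_{t|0})_{t=0}^{T-1}, (\bar v_{t|0})_{t=0}^{T-1}] \subset \mathbb R^{T m_u}$, with $\underline v_{t|0}, \bar v_{t|0} \in \{0,1\}^{m_u}$ and $\underline v_{t|0} \le \bar v_{t|0}$, whose union contains $\{0,1\}^{T m_u}$. Let $v_0 \in \{0,1\}^{m_u}$. Let $\mathscr V_1^0$ be the collection obtained as follows: for every $\mathcal V_0 \in \mathscr V_0^*$ satisfying $\underline v_{0|0} \le v_0 \le \bar v_{0|0}$, include the interval $$\mathcal V_1 := [(\underline v_{1|0}, \ldots, \underline v_{T-1|0}, 0, \ldots, 0), (\bar v_{1|0}, \ldots, \bar v_{T-1|0}, 1, \ldots, 1)],$$ where the trailing blocks of zeros and ones each have $m_u$ entries; intervals $\mathcal V_0$ not satisfying this condition are discarded. Then the union of the sets in $\mathscr V_1^0$ contains $\{0,1\}^{T m_u}$, and the sets in $\mathscr V_1^0$ are pairwise disjoint intervals.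
   Context: For $a, b \in \mathbb R^{N}$ with $a \le b$ componentwise, $[a,b]$ denotes the box $\{z \in \mathbb R^N : a \le z \le b\}$. A vector in $\mathbb R^{T m_u}$ is viewed as a concatenation $(v_0, \ldots, v_{T-1})$ of $T$ blocks $v_t \in \mathbb R^{m_u}$; inequalities between vectors are componentwise. *)

(* Defs.v *)
(* A vector of R^{T m_u}, viewed as the concatenation
   (v_0, ..., v_{T-1}) of T blocks of size m_u, is represented as a matrix
   'M[R]_(T, mu) whose row t is the block v_t. *)
From HB Require Import structures.
From mathcomp Require Import all_boot all_order all_algebra.
Set Implicit Arguments. Unset Strict Implicit. Unset Printing Implicit Defensive.
Import Order.TTheory GRing.Theory Num.Theory.
Local Open Scope ring_scope.

Section Defs.
Variables (R : realFieldType) (T mu : nat).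

Notation vec := 'M[R]_(T, mu).

Definition in_box (a b z : vec) : Prop :=
  forall (t : 'I_T) (i : 'I_mu), a t i <= z t i /\ z t i <= b t i.

Definition binary (z : vec) : Prop :=
  forall (t : 'I_T) (i : 'I_mu), z t i = 0 \/ z t i = 1.

Definition binary_interval (p : vec * vec) : Prop :=
  binary p.1 /\ binary p.2 /\ forall (t : 'I_T) (i : 'I_mu), p.1 t i <= p.2 t i.

Definition pairwise_disjoint (V : seq (vec * vec)) : Prop :=
  forall (j k : nat), (j < size V)%N -> (k < size V)%N -> j != k ->
  forall z : vec, ~ (in_box (nth (0, 0) V j).1 (nth (0, 0) V j).2 z /\
                     in_box (nth (0, 0) V k).1 (nth (0, 0) V k).2 z).

Definition covers_binary (V : seq (vec * vec)) : Prop :=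
  forall z : vec, binary z -> exists2 p, p \in V & in_box p.1 p.2 z.

Definition shift_blocks (a : vec) (c : R) : vec :=
  \matrix_(t < T, i < mu)
    match (insub t.+1 : option 'I_T) with Some t' => a t' i | None => c end.

Definition first_block_ok (v0 : 'I_mu -> R) (p : vec * vec) : bool :=
  [forall t : 'I_T, (val t == 0)%N ==>
     [forall i : 'I_mu, (p.1 t i <= v0 i) && (v0 i <= p.2 t i)]].

Definition next_collection (v0 : 'I_mu -> R) (V : seq (vec * vec))
  : seq (vec * vec) :=
  [seq (shift_blocks p.1 0, shift_blocks p.2 1) | p <- V & first_block_ok v0 p].

End Defs.

(* Main.v *)
Require Import Defs.
From HB Require Import structures.
From mathcomp Require Import all_boot all_order all_algebra.
Import Order.TTheory GRing.Theory Num.Theory.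
Local Open Scope ring_scope.
Set Implicit Arguments. Unset Strict Implicit.

Section Aux.
Variables (R : realFieldType) (T mu : nat).
Notation vec := 'M[R]_(T.+1, mu).

Definition disj (p q : vec * vec) : Prop :=
  forall z : vec, ~ (in_box p.1 p.2 z /\ in_box q.1 q.2 z).

Lemma pd_cons a V : (forall q, q \in V -> disj a q) -> pairwise_disjoint V ->
  pairwise_disjoint (a :: V).
Proof.
move=> Ha HV [|j] [|k] //= hj hk hjk z.
- move=> [H1 H2]; apply: (Ha (nth (0,0) V k) (mem_nth _ hk) z); by split.
- move=> [H1 H2]; apply: (Ha (nth (0,0) V j) (mem_nth _ hj) z); by split.
- exact: HV.
Qed.

Lemma pd_consE a V : pairwise_disjoint (a :: V) ->
  (forall q, q \in V -> disj a q) /\ pairwise_disjoint V.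
Proof.
move=> H; split.
- move=> q qV z.
  have := H 0%N (index q V).+1 isT; rewrite /= ltnS index_mem => /(_ qV isT z).
  by rewrite nth_index.
- move=> j k hj hk hjk; exact: (H j.+1 k.+1 hj hk hjk).
Qed.

Variable v0 : 'I_mu -> R.

Definition liftz (z : vec) : vec :=
  \matrix_(t < T.+1, i < mu)
    if val t == 0%N then v0 i else z (inord t.-1) i.

Lemma insub_pred (t : 'I_T.+1) : val t != 0%N ->
  insub (inord t.-1 : 'I_T.+1).+1 = Some t.
Proof.
move=> ht; have e : (inord t.-1 : 'I_T.+1).+1 = t.
  rewrite inordK; first by rewrite prednK // lt0n.
  by apply: leq_ltn_trans (ltn_ord t); exact: leq_pred.
rewrite e; case: insubP => [t' _ Ht'|]; first by congr Some; apply: val_inj.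
by rewrite ltn_ord.
Qed.

Lemma lift_box (p : vec * vec) z : first_block_ok v0 p ->
  in_box (shift_blocks p.1 0) (shift_blocks p.2 1) z -> in_box p.1 p.2 (liftz z).
Proof.
move=> /forallP ok Hz t i; rewrite /liftz mxE.
case: ifP => ht.
- have := ok t; rewrite ht /= => /forallP /(_ i) /andP [h1 h2]; by split.
- have [h1 h2] := Hz (inord t.-1) i.
  move: h1 h2; rewrite !mxE insub_pred ?ht //.
Qed.

End Aux.

Theorem proposition1 (R : realFieldType) (T mu : nat)
  (hT : (0 < T)%N) (hmu : (0 < mu)%N)
  (V0 : seq ('M[R]_(T, mu) * 'M[R]_(T, mu)))
  (hint : forall p, p \in V0 -> binary_interval p)
  (hdisj : pairwise_disjoint V0)
  (hcov : covers_binary V0)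
  (v0 : 'I_mu -> R) (hv0 : forall i, v0 i = 0 \/ v0 i = 1) :
  covers_binary (next_collection v0 V0) /\
  pairwise_disjoint (next_collection v0 V0) /\
  (forall p, p \in next_collection v0 V0 -> binary_interval p).
Proof.
case: T hT V0 hint hdisj hcov => // T _ V0 hint hdisj hcov.
split; last split.
- move=> z zb.
  have lb : binary (@liftz _ _ _ v0 z).
    move=> t i; rewrite mxE; case: ifP => _; [exact: hv0 | exact: zb].
  have [p pV pz] := hcov _ lb.
  have ok : first_block_ok v0 p.
    apply/forallP => t; apply/implyP => ht; apply/forallP => i.
    have [h1 h2] := pz t i; move: h1 h2; rewrite mxE ht => h1 h2.
    by rewrite h1 h2.
  exists (shift_blocks p.1 0, shift_blocks p.2 1).
    by apply/mapP; exists p => //; rewrite mem_filter ok.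
  move=> t i /=; rewrite !mxE.
  case: insubP => [t' _ Ht'|_].
  + have [h1 h2] := pz t' i; move: h1 h2; rewrite mxE.
    have -> : (val t' == 0%N) = false by rewrite Ht'.
    have -> : (inord (val t').-1 : 'I_T.+1) = t.
      by apply: val_inj; rewrite Ht' /= inordK.
    by move=> -> ->.
  + by case: (zb t i) => ->; rewrite ?ler01 lexx.
- elim: V0 hint hdisj {hcov} => [|a V IH] hint hdisj; first by move=> [|j] [|k].
  have [Ha HV] := pd_consE hdisj.
  have IH' := IH (fun p pV => hint p (mem_behead (s := a :: V) pV)) HV.
  rewrite /next_collection /=; case: ifP => oka //.
  apply: pd_cons => // q /mapP [p]; rewrite mem_filter => /andP [okp pV] -> z /= [H1 H2].
  apply: (Ha p pV (@liftz _ _ _ v0 z)); split; exact: lift_box.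
- move=> q /mapP [p]; rewrite mem_filter => /andP [okp pV] ->.
  have [b1 [b2 b12]] := hint p pV.
  split; [|split]; move=> /= t i; rewrite !mxE; case: insubP => [t' _ _|_].
  + exact: b1.
  + by left.
  + exact: b2.
  + by right.
  + exact: b12.
  + by rewrite ler01.
Qed.
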